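(* In the setting described in the context, let $\varepsilon\in(0,1)$, $\Omega_n=((1-\varepsilon)\Sigma_n+\varepsilon I)^{-1}$, $\mathbf c=\mathrm{vec}(\mathbf C^\top)$, and define the $n^2\times n^2$ matrix $$\widetilde\Omega_n=\frac1\varepsilon\mathbf I_{n^2}-\frac{1-\varepsilon}{\varepsilon}\mathbf T\big(\varepsilon\mathbf I_{2n+4}+(1-\varepsilon)\mathbf U^\top\mathbf T\big)^{-1}\mathbf U^\top.$$ Then $\Omega_n(\bar\psi_n)=\sum_{i,j}b_{ij}\Lambda_{x_i,y_j}$, where the coefficients $b_{ij}$ form a matrix $\mathbf B\in\mathbb{R}^{n\times n}$ satisfying $\mathbf b^\top:=[\mathrm{vec}(\mathbf B^\top)]^\top=\mathbf c^\top\widetilde\Omega_n$.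
   Context: $k,\ell$ bounded kernels on $\mathcal{X},\mathcal{Y}$ with feature maps $K_x,L_y$; $\mathcal{H}=\mathcal{H}_\mathcal{X}\otimes\mathcal{H}_\mathcal{Y}$ real separable tensor-product RKHS with feature map $\Lambda_{x,y}=K_x\otimes L_y$. Data $z_i=(x_i,a_i,y_i)$, $i\in[n]$; $[n]$ partitioned into folds $\mathcal{I}^1,\mathcal{I}^2$ of sizes $n_1,n_2$; $s(i)$ the fold containing $i$, $r(i)=3-s(i)$. For $r\in\{1,2\}$: $\pi^r_n:\mathcal{X}\to(0,1)$, $\theta^r_{n,a}(x)=\sum_j[\boldsymbol\beta^r_a(x)]_j\Lambda_{x,y_j}$ with $[\boldsymbol\beta^r_a(x)]_j=0$ if $j\notin\mathcal{I}^r$ or $a_j\ne a$; $w_i=\pi^{r(i)}_n(x_i)$. With $s=3-r$: $\psi^r_n=\frac1{n_s}\sum_{i\in\mathcal{I}^s}[\theta^r_{n,1}(x_i)-\theta^r_{n,0}(x_i)]$; $\phi^r_n(z)=(\frac{a}{\pi^r_n(x)}-\frac{1-a}{1-\pi^r_n(x)})(\Lambda_{x,y}-\theta^r_{n,a}(x))+\theta^r_{n,1}(x)-\theta^r_{n,0}(x)-\psi^r_n$; $\bar\psi_n=\frac12\sum_r(\psi^r_n+\frac1{n_s}\sum_{i\in\mathcal{I}^s}\phi^r_n(z_i))$; $\Sigma_n(h)=\frac12\sum_r\frac1{n_s}\sum_{i\in\mathcal{I}^s}\langle\phi^r_n(z_i),h\rangle_{\mathcal{H}}\phi^r_n(z_i)$.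 Matrices: $[\mathbf K]_{ij}=k(x_i,x_j)$, $[\mathbf L]_{ij}=\ell(y_i,y_j)$, $\mathbf G=\mathbf K\otimes\mathbf L$. $\mathbf C$: $[\mathbf C]_{ii}=\frac1{2n_{s(i)}}(\frac{a_i}{w_i}-\frac{1-a_i}{1-w_i})$, and for $j\ne i$, $[\mathbf C]_{ij}=\frac1{2n_{s(i)}}[(1-\frac{a_i}{w_i})[\boldsymbol\beta^{r(i)}_1(x_i)]_j+(\frac{1-a_i}{1-w_i}-1)[\boldsymbol\beta^{r(i)}_0(x_i)]_j]$. $\mathbf E$: $[\mathbf E]_{ii}=0$, and for $j\ne i$, $[\mathbf E]_{ij}=\frac1{2n_{s(i)}}([\boldsymbol\beta^{r(i)}_1(x_i)]_j-[\boldsymbol\beta^{r(i)}_0(x_i)]_j)$. For $s\in\{1,2\}$: $[\mathbf D^s]_{ij}=\mathbf 1\{i\in\mathcal{I}^s\}\sqrt{2n_s}[\mathbf C]_{ij}$, $[\mathbf V^s]_{ij}=\mathbf 1\{i\in\mathcal{I}^s\}\sqrt{2/n_s}[\mathbf E]_{ij}$, $\mathbf W^s=\mathbf D^s-n_s\mathbf V^s$; $\mathbf d^s,\mathbf v^s,\mathbf w^s$ their row-wise vectorizations $\mathrm{vec}(\mathbf M^\top)\in\mathbb{R}^{n^2}$; $\mathbf S^s=(\mathbf I_n\bullet\mathbf D^s)^\top$, where the $i$-th row of the face-splitting product $\mathbf A\bullet\mathbf B$ is $\mathbf A_{i,:}\otimes\mathbf B_{i,:}$. $\mathbf T=[\mathbf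 G\mathbf S^1,\mathbf G\mathbf S^2,\mathbf G\mathbf v^1,\mathbf G\mathbf v^2,\mathbf G\mathbf w^1,\mathbf G\mathbf w^2]$, $\mathbf U=[\mathbf S^1,\mathbf S^2,-\mathbf d^1,-\mathbf d^2,-\mathbf v^1,-\mathbf v^2]\in\mathbb{R}^{n^2\times(2n+4)}$. *)

(* Defs.v *)
From mathcomp Require Import all_boot all_order all_algebra.
Set Implicit Arguments. Unset Strict Implicit. Unset Printing Implicit Defensive.
Import Order.TTheory GRing.Theory Num.Theory.
Local Open Scope ring_scope.

(* decode an index of 'I_(m*n) into the pair (i,j) with p = i*n + j
   (inverse of mxvec_index; mxvec is the ROW-WISE vectorization vec(M^T)). *)
Definition unvec (m n : nat) (p : 'I_(m * n)) : 'I_m * 'I_n :=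
  enum_val (cast_ord (esym (@mxvec_cast m n)) p).

(* row-wise vectorization vec(M^T), as a column vector in R^{m n} *)
Definition vecr (R : Type) (m n : nat) (M : 'M[R]_(m, n)) : 'cV[R]_(m * n) :=
  (mxvec M)^T.

Definition kron (R : pzRingType) (m1 n1 m2 n2 : nat)
  (A : 'M[R]_(m1, n1)) (B : 'M[R]_(m2, n2)) : 'M[R]_(m1 * m2, n1 * n2) :=
  \matrix_(p, q) (A (unvec p).1 (unvec q).1 * B (unvec p).2 (unvec q).2).

Definition facesplit (R : pzRingType) (m n1 n2 : nat)
  (A : 'M[R]_(m, n1)) (B : 'M[R]_(m, n2)) : 'M[R]_(m, n1 * n2) :=
  \matrix_(i, q) (A i (unvec q).1 * B i (unvec q).2).

(* Folds are indexed by 'I_2: fold 0 = I^1, fold 1 = I^2. *)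
Record data (R : Type) (X Y : Type) (n : nat) := Data {
  xs : 'I_n -> X;
  as_ : 'I_n -> bool;
  ys : 'I_n -> Y;
  fold : 'I_n -> 'I_2;
  pihat : 'I_2 -> X -> R;
  beta : 'I_2 -> bool -> X -> 'I_n -> R
}.

Definition oth (t : 'I_2) : 'I_2 := if t == ord0 then ord_max else ord0.


Definition nfold (R : Type) (X Y : Type) (n : nat) (D : data R X Y n) (t : 'I_2) : nat :=
  #|[set i | fold D i == t]|.

Definition rfold (R : Type) (X Y : Type) (n : nat) (D : data R X Y n) (i : 'I_n) : 'I_2 :=
  oth (fold D i).

Definition wi (R : Type) (X Y : Type) (n : nat) (D : data R X Y n) (i : 'I_n) : R :=
  pihat D (rfold D i) (xs D i).

Definition bR (R : pzRingType) (b : bool) : R := (b : nat)%:R.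

Definition Cmx (R : fieldType) X Y n (D : data R X Y n) : 'M[R]_n :=
  \matrix_(i, j)
    ((2 * (nfold D (fold D i))%:R)^-1 *
     (if i == j then bR R (as_ D i) / wi D i - (1 - bR R (as_ D i)) / (1 - wi D i)
      else (1 - bR R (as_ D i) / wi D i) * beta D (rfold D i) true (xs D i) j
         + ((1 - bR R (as_ D i)) / (1 - wi D i) - 1)
             * beta D (rfold D i) false (xs D i) j)).

Definition Emx (R : fieldType) X Y n (D : data R X Y n) : 'M[R]_n :=
  \matrix_(i, j)
    (if i == j then 0
     else (2 * (nfold D (fold D i))%:R)^-1 *
          (beta D (rfold D i) true (xs D i) j - beta D (rfold D i) false (xs D i) j)).

Definition Dmx (R : rcfType) X Y n (D : data R X Y n) (s : 'I_2) : 'M[R]_n :=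
  \matrix_(i, j) (bR R (fold D i == s) * Num.sqrt (2 * (nfold D s)%:R) * Cmx D i j).

Definition Vmx (R : rcfType) X Y n (D : data R X Y n) (s : 'I_2) : 'M[R]_n :=
  \matrix_(i, j) (bR R (fold D i == s) * Num.sqrt (2 / (nfold D s)%:R) * Emx D i j).

Definition Wmx (R : rcfType) X Y n (D : data R X Y n) (s : 'I_2) : 'M[R]_n :=
  Dmx D s - (nfold D s)%:R *: Vmx D s.

Definition Smx (R : rcfType) X Y n (D : data R X Y n) (s : 'I_2) : 'M[R]_(n * n, n) :=
  (facesplit 1%:M (Dmx D s))^T.

Definition Kmx (R : Type) X Y n (k : X -> X -> R) (D : data R X Y n) : 'M[R]_n :=
  \matrix_(i, j) k (xs D i) (xs D j).

Definition Lmx (R : Type) X Y n (l : Y -> Y -> R) (D : data R X Y n) : 'M[R]_n :=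
  \matrix_(i, j) l (ys D i) (ys D j).

Definition Gmx (R : pzRingType) X Y n (k : X -> X -> R) (l : Y -> Y -> R)
  (D : data R X Y n) : 'M[R]_(n * n) := kron (Kmx k D) (Lmx l D).

Definition s1 : 'I_2 := ord0.
Definition s2 : 'I_2 := ord_max.

Definition Tmx (R : rcfType) X Y n k l (D : data R X Y n)
  : 'M[R]_(n * n, n + (n + (1 + (1 + (1 + 1))))) :=
  let G := Gmx k l D in
  row_mx (G *m Smx D s1) (row_mx (G *m Smx D s2)
   (row_mx (G *m vecr (Vmx D s1)) (row_mx (G *m vecr (Vmx D s2))
    (row_mx (G *m vecr (Wmx D s1)) (G *m vecr (Wmx D s2)))))).

Definition Umx (R : rcfType) X Y n (D : data R X Y n)
  : 'M[R]_(n * n, n + (n + (1 + (1 + (1 + 1))))) :=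
  row_mx (Smx D s1) (row_mx (Smx D s2)
   (row_mx (- vecr (Dmx D s1)) (row_mx (- vecr (Dmx D s2))
    (row_mx (- vecr (Vmx D s1)) (- vecr (Vmx D s2)))))).

Definition Mid (R : rcfType) X Y n k l (D : data R X Y n) (eps : R) :=
  eps%:M + (1 - eps) *: ((Umx D)^T *m Tmx k l D).

Definition Omt (R : rcfType) X Y n k l (D : data R X Y n) (eps : R) : 'M[R]_(n * n) :=
  eps^-1 *: 1%:M
  - ((1 - eps) / eps) *: (Tmx k l D *m invmx (Mid k l D eps) *m (Umx D)^T).

Definition Bmx (R : rcfType) X Y n k l (D : data R X Y n) (eps : R) : 'M[R]_n :=
  vec_mx ((vecr (Cmx D))^T *m Omt k l D eps).

Definition theta (R : pzRingType) (V : lmodType R) X Y n (Lam : X -> Y -> V)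
  (D : data R X Y n) (r : 'I_2) (a : bool) (x : X) : V :=
  \sum_(j < n) beta D r a x j *: Lam x (ys D j).

Definition psir (R : fieldType) (V : lmodType R) X Y n (Lam : X -> Y -> V)
  (D : data R X Y n) (r : 'I_2) : V :=
  ((nfold D (oth r))%:R)^-1 *:
    \sum_(i < n | fold D i == oth r)
       (theta Lam D r true (xs D i) - theta Lam D r false (xs D i)).

Definition phir (R : fieldType) (V : lmodType R) X Y n (Lam : X -> Y -> V)
  (D : data R X Y n) (r : 'I_2) (x : X) (a : bool) (y : Y) : V :=
  (bR R a / pihat D r x - (1 - bR R a) / (1 - pihat D r x)) *: (Lam x y - theta Lam D r a x)
  + theta Lam D r true x - theta Lam D r false x - psir Lam D r.

Definition phiri (R : fieldType) (V : lmodType R) X Y n (Lam : X -> Y -> V)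
  (D : data R X Y n) (r : 'I_2) (i : 'I_n) : V :=
  phir Lam D r (xs D i) (as_ D i) (ys D i).

Definition psibar (R : fieldType) (V : lmodType R) X Y n (Lam : X -> Y -> V)
  (D : data R X Y n) : V :=
  2^-1 *: \sum_(r < 2)
    (psir Lam D r + ((nfold D (oth r))%:R)^-1 *:
        \sum_(i < n | fold D i == oth r) phiri Lam D r i).

Definition Sigman (R : fieldType) (V : lmodType R) X Y n (Lam : X -> Y -> V)
  (inner : V -> V -> R) (D : data R X Y n) (h : V) : V :=
  2^-1 *: \sum_(r < 2) (((nfold D (oth r))%:R)^-1 *:
    \sum_(i < n | fold D i == oth r) (inner (phiri Lam D r i) h *: phiri Lam D r i)).

(* Main.v *)
Require Import Defs.
From mathcomp Require Import all_boot all_order all_algebra.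
From mathcomp Require Import ring.
Import Order.TTheory GRing.Theory Num.Theory.
Set Implicit Arguments. Unset Strict Implicit. Unset Printing Implicit Defensive.
Local Open Scope ring_scope.

Lemma unvec_index m n (i : 'I_m) (j : 'I_n) : unvec (mxvec_index i j) = (i, j).
Proof. by rewrite /unvec /mxvec_index cast_ordK enum_rankK. Qed.

Lemma index_unvec m n (a : 'I_(m * n)) : mxvec_index (unvec a).1 (unvec a).2 = a.
Proof. by rewrite /unvec /mxvec_index -surjective_pairing enum_valK cast_ordKV. Qed.

Lemma sum_unvec (Z : nmodType) m n (F : 'I_m -> 'I_n -> Z) :
  \sum_(a < m * n) F (unvec a).1 (unvec a).2 = \sum_i \sum_j F i j.
Proof.
rewrite pair_bigA /=.
rewrite (reindex (fun p : 'I_m * 'I_n => mxvec_index p.1 p.2)) /=.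
  by apply: eq_bigr => -[i j] _; rewrite unvec_index.
exists (@unvec m n) => [[i j] _|a _]; first by rewrite unvec_index.
by rewrite index_unvec.
Qed.

Lemma mxvecE' (R : Type) m n (M : 'M[R]_(m, n)) a : mxvec M 0 a = M (unvec a).1 (unvec a).2.
Proof. by have := mxvecE M (unvec a).1 (unvec a).2; rewrite index_unvec. Qed.

Lemma mxvecEz (R : Type) m n (M : 'M[R]_(m, n)) z a : mxvec M z a = M (unvec a).1 (unvec a).2.
Proof. by rewrite -(mxvecE' M a); congr (mxvec M _ a); apply/val_inj; case: z => [[]]. Qed.

Lemma oth_inv (t : 'I_2) : oth (oth t) = t.
Proof. by apply/val_inj; case: t => [[|[|m]]] //= Hm. Qed.

Lemma oth_neq (t : 'I_2) : oth t != t.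
Proof. by case: t => [[|[|m]]] //= Hm. Qed.

Definition lcv (R : pzRingType) (V : lmodType R) X Y n (Lam : X -> Y -> V)
  (D : data R X Y n) (b : 'rV[R]_(n * n)) : V :=
  \sum_a b 0 a *: Lam (xs D (unvec a).1) (ys D (unvec a).2).

Lemma lcvD (R : pzRingType) (V : lmodType R) X Y n (Lam : X -> Y -> V) (D : data R X Y n) u v :
  lcv Lam D (u + v) = lcv Lam D u + lcv Lam D v.
Proof. by rewrite /lcv -big_split; apply: eq_bigr => a _; rewrite mxE scalerDl. Qed.

Lemma lcvZ (R : pzRingType) (V : lmodType R) X Y n (Lam : X -> Y -> V) (D : data R X Y n) c u :
  lcv Lam D (c *: u) = c *: lcv Lam D u.
Proof. by rewrite /lcv scaler_sumr; apply: eq_bigr => a _; rewrite mxE scalerA. Qed.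

Lemma lcv0 (R : pzRingType) (V : lmodType R) X Y n (Lam : X -> Y -> V) (D : data R X Y n) :
  lcv Lam D 0 = 0.
Proof. by rewrite /lcv big1 // => a _; rewrite mxE scale0r. Qed.

Lemma lcvB (R : pzRingType) (V : lmodType R) X Y n (Lam : X -> Y -> V) (D : data R X Y n) u v :
  lcv Lam D (u - v) = lcv Lam D u - lcv Lam D v.
Proof. by rewrite lcvD -(scaleN1r v) lcvZ scaleN1r. Qed.

Lemma lcv_sum (R : pzRingType) (V : lmodType R) X Y n (Lam : X -> Y -> V) (D : data R X Y n)
  (I : Type) (r : seq I) (P : pred I) (F : I -> 'rV[R]_(n * n)) :
  lcv Lam D (\sum_(i <- r | P i) F i) = \sum_(i <- r | P i) lcv Lam D (F i).
Proof. exact: (big_morph _ (lcvD Lam D) (lcv0 Lam D)). Qed.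

Lemma lcM (R : pzRingType) (V : lmodType R) X Y n (Lam : X -> Y -> V) (D : data R X Y n)
  (M : 'M[R]_n) :
  \sum_(i < n) \sum_(j < n) M i j *: Lam (xs D i) (ys D j) = lcv Lam D (mxvec M).
Proof.
rewrite /lcv (eq_bigr (fun a => M (unvec a).1 (unvec a).2 *: Lam (xs D (unvec a).1) (ys D (unvec a).2))).
  by rewrite (sum_unvec (fun i j => M i j *: Lam (xs D i) (ys D j))).
by move=> a _; rewrite mxvecE'.
Qed.

Lemma lc_row (R : pzRingType) (V : lmodType R) X Y n (Lam : X -> Y -> V) (D : data R X Y n)
  (i : 'I_n) (f : 'I_n -> R) :
  \sum_(q < n) f q *: Lam (xs D i) (ys D q) =
  lcv Lam D (mxvec (\matrix_(p, q) ((p == i)%:R * f q))).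
Proof.
rewrite -lcM [RHS](bigD1 i) //= [X in _ = _ + X]big1 ?addr0.
  by apply: eq_bigr => q _; rewrite mxE eqxx mul1r.
move=> p /negbTE pi; rewrite big1 // => q _; by rewrite mxE pi mul0r scale0r.
Qed.

Lemma inner0 (R : pzRingType) (V : lmodType R) (inner : V -> V -> R)
  (hlin : forall (c : R) (u v w : V), inner (c *: u + v) w = c * inner u w + inner v w) w :
  inner 0 w = 0.
Proof.
have := hlin 1 0 0 w; rewrite scaler0 addr0 mul1r => h.
by apply: (@addrI _ (inner 0 w)); rewrite addr0 -h.
Qed.

Lemma inner_lcv (R : comPzRingType) (V : lmodType R) (inner : V -> V -> R) X Y n (Lam : X -> Y -> V)
  (D : data R X Y n) (k : X -> X -> R) (l : Y -> Y -> R)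
  (hlin : forall (c : R) (u v w : V), inner (c *: u + v) w = c * inner u w + inner v w)
  (hsym : forall u v : V, inner u v = inner v u)
  (hLam : forall x x' y y', inner (Lam x y) (Lam x' y') = k x x' * l y y') p b :
  inner (lcv Lam D p) (lcv Lam D b) = (b *m Gmx k l D *m p^T) 0 0.
Proof.
have sumL : forall (I : Type) (r : seq I) (F : I -> V) (c : I -> R) w,
    inner (\sum_(i <- r) c i *: F i) w = \sum_(i <- r) c i * inner (F i) w.
  move=> I r F c w; elim: r => [|x r IH]; first by rewrite !big_nil inner0.
  by rewrite !big_cons hlin IH.
rewrite /lcv sumL mxE; apply: eq_bigr => c _.
rewrite hsym sumL !mxE mulrC; congr (_ * _).
apply: eq_bigr => a _; rewrite hLam !mxE; ring.
Qed.
Lemma sum2 (Z : nmodType) (F : 'I_2 -> Z) : \sum_(s < 2) F s = F s1 + F s2.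
Proof. by rewrite big_ord_recl big_ord1; congr (_ + F _); apply/val_inj. Qed.

Lemma sum_fold (Z : nmodType) n (f : 'I_n -> 'I_2) (F : 'I_2 -> 'I_n -> Z) :
  \sum_i F (f i) i = \sum_(s < 2) \sum_(i | f i == s) F s i.
Proof.
rewrite (partition_big f predT) //; apply: eq_bigr => s _.
by apply: eq_bigr => i /eqP ->.
Qed.

Lemma rowtr11 (R : comPzRingType) N (x y : 'rV[R]_N) :
  (x *m y^T) 0 0 *: y = x *m (y^T *m y).
Proof. by rewrite mulmxA {2}(mx11_scalar (x *m y^T)) mul_scalar_mx. Qed.

Lemma TU (R : rcfType) X Y n k l (D : data R X Y n) :
  Tmx k l D *m (Umx D)^T = Gmx k l D *m
   \sum_(s < 2) (Smx D s *m (Smx D s)^T - vecr (Dmx D s) *m (vecr (Vmx D s))^T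
       - vecr (Vmx D s) *m (vecr (Dmx D s))^T
       + (nfold D s)%:R *: (vecr (Vmx D s) *m (vecr (Vmx D s))^T)).
Proof.
rewrite /Tmx /Umx -!mul_mx_row -mulmxA; congr (_ *m _).
rewrite !tr_row_mx !mul_row_col sum2 /Wmx.
have vl : forall (A B : 'M[R]_n) c, vecr (A - c *: B) = vecr A - c *: vecr B.
  by move=> A B c; rewrite /vecr linearB linearZ /= linearB linearZ.
have trN : forall m p (A : 'M[R]_(m, p)), (- A)^T = - A^T.
  by move=> m p A; apply/matrixP => i j; rewrite !mxE.
rewrite !vl !trN !mulmxN !mulmxBl -!scalemxAl.
set a1 := Smx D s1 *m _. set a2 := Smx D s2 *m _.
set b1 := vecr (Dmx D s1) *m _. set b2 := vecr (Dmx D s2) *m _.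
set c1 := vecr (Vmx D s1) *m (vecr (Dmx D s1))^T.
set c2 := vecr (Vmx D s2) *m (vecr (Dmx D s2))^T.
set e1 := vecr (Vmx D s1) *m (vecr (Vmx D s1))^T.
set e2 := vecr (Vmx D s2) *m (vecr (Vmx D s2))^T.
by apply/matrixP => i j; rewrite !mxE; ring.
Qed.

Lemma sum_gg (R : rcfType) X Y n (D : data R X Y n) :
  \sum_i (row i (facesplit 1%:M (Dmx D (fold D i))) - mxvec (Vmx D (fold D i)))^T *m
         (row i (facesplit 1%:M (Dmx D (fold D i))) - mxvec (Vmx D (fold D i)))
  = \sum_(s < 2) (Smx D s *m (Smx D s)^T - vecr (Dmx D s) *m (vecr (Vmx D s))^T
       - vecr (Vmx D s) *m (vecr (Dmx D s))^T
       + (nfold D s)%:R *: (vecr (Vmx D s) *m (vecr (Vmx D s))^T)).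
Proof.
rewrite (sum_fold (fold D) (fun s i => (row i (facesplit 1%:M (Dmx D s)) - mxvec (Vmx D s))^T *m
         (row i (facesplit 1%:M (Dmx D s)) - mxvec (Vmx D s)))).
apply: eq_bigr => s _.
set F := facesplit 1%:M (Dmx D s).
have Fe : forall i c, F i c = (i == (unvec c).1)%:R * Dmx D s i (unvec c).2.
  by move=> i c; rewrite /F /facesplit mxE; congr (_ * _); rewrite mxE.
have Fz : forall i, fold D i != s -> forall c, F i c = 0.
  by move=> i /negbTE h c; rewrite Fe [Dmx _ _ _ _]mxE h /bR !mul0r mulr0.
have Fs : forall c, \sum_i F i c = Dmx D s (unvec c).1 (unvec c).2.
  move=> c; rewrite (bigD1 (unvec c).1) //= big1 ?addr0.
    by rewrite Fe eqxx mul1r.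
  by move=> i /negbTE h; rewrite Fe h mul0r.
rewrite /Smx -/F /vecr.
have Fs' : forall c, \sum_i F i c = mxvec (Dmx D s) 0 c by move=> c; rewrite Fs mxvecE'.
set md := mxvec (Dmx D s) in Fs' *. set mv := mxvec (Vmx D s).
clearbody F md mv.
have cardE : \sum_(i | fold D i == s) (1 : R) = (nfold D s)%:R.
  by rewrite sumr_const /nfold cardsE.
apply/matrixP => a b.
rewrite summxE.
under eq_bigr => i _ do rewrite !mxE big_ord1 !mxE.
rewrite !mxE !big_ord1 !mxE trmxK.
under [X in _ = X - _ - _ + _]eq_bigr => j _ do rewrite mxE.
have e2 : forall c, \sum_(i | fold D i == s) F i c = md 0 c.
  move=> c; rewrite -Fs' [RHS](bigID (fun i => fold D i == s)) /= [X in _ = _ + X]big1 ?addr0 //.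
  by move=> i /Fz ->.
rewrite (eq_bigr (fun i => F i a * F i b - F i a * mv 0 b - mv 0 a * F i b
   + 1 * (mv 0 a * mv 0 b))); last by move=> i _; ring.
rewrite !big_split /= !sumrN -!mulr_suml -!mulr_sumr cardE !e2.
congr (_ - _ - _ + _).
rewrite [RHS](bigID (fun i => fold D i == s)) /= [X in _ = _ + X]big1 ?addr0 //.
by move=> i /Fz ->; rewrite mul0r.
Qed.

Definition Cb (R : fieldType) X Y n (D : data R X Y n) (i j : 'I_n) : R :=
  if i == j then bR R (as_ D i) / wi D i - (1 - bR R (as_ D i)) / (1 - wi D i)
  else (1 - bR R (as_ D i) / wi D i) * beta D (rfold D i) true (xs D i) j
     + ((1 - bR R (as_ D i)) / (1 - wi D i) - 1) * beta D (rfold D i) false (xs D i) j.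

Definition Qm (R : fieldType) X Y n (D : data R X Y n) (i : 'I_n) : 'M[R]_n :=
  \matrix_(p, q) ((p == i)%:R * Cb D i q).

Lemma E1 (R : fieldType) (V : lmodType R) X Y n (Lam : X -> Y -> V) (D : data R X Y n)
  (hbeta : forall (r : 'I_2) (a : bool) (x : X) (j : 'I_n),
      (fold D j != r) || (as_ D j != a) -> beta D r a x j = 0) i :
  phiri Lam D (rfold D i) i = lcv Lam D (mxvec (Qm D i)) - psir Lam D (rfold D i).
Proof.
rewrite /phiri /phir; congr (_ - _).
rewrite -lc_row /theta.
have hL : Lam (xs D i) (ys D i) = \sum_q (q == i)%:R *: Lam (xs D i) (ys D q).
  rewrite (bigD1 i) //= big1 ?addr0 ?eqxx ?scale1r //.
  by move=> q /negbTE ->; rewrite scale0r.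
have hb : forall a, beta D (rfold D i) a (xs D i) i = 0.
  by move=> a; apply: hbeta; rewrite /rfold eq_sym oth_neq.
rewrite hL -sumrB scaler_sumr -big_split -sumrB /=.
apply: eq_bigr => q _.
rewrite -scalerBl scalerA -scalerDl -scalerBl; congr (_ *: _).
rewrite /Cb -/(wi D i) eq_sym; case: eqP => [qi|_].
  by rewrite -qi !hb /=; ring.
by case: (as_ D i); rewrite /bR /=; ring.
Qed.

Definition Psm (R : fieldType) X Y n (D : data R X Y n) (r : 'I_2) : 'M[R]_n :=
  \matrix_(p, q) (((nfold D (oth r))%:R)^-1 *
     (bR R (fold D p == oth r) * (beta D r true (xs D p) q - beta D r false (xs D p) q))).

Lemma E2 (R : fieldType) (V : lmodType R) X Y n (Lam : X -> Y -> V) (D : data R X Y n) r :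
  psir Lam D r = lcv Lam D (mxvec (Psm D r)).
Proof.
rewrite /psir /theta.
under eq_bigr => i _ do (rewrite -sumrB; under eq_bigr => q _ do rewrite -scalerBl; rewrite lc_row).
rewrite -lcv_sum -lcvZ -linear_sum -linearZ /=; congr (lcv _ _ (mxvec _)).
apply/matrixP => p q; rewrite !mxE summxE; congr (_ * _).
rewrite (bigID (fun i => i == p)) /= [X in _ + X = _]big1; last first.
  by move=> i /andP[_ /negbTE ip]; rewrite !mxE eq_sym ip mul0r.
rewrite addr0.
case: (boolP (fold D p == oth r)) => hp.
  rewrite (big_pred1 p); first by rewrite !mxE eqxx /bR /= !mul1r.
  by move=> i; case: (eqVneq i p) => [->|ip]; [rewrite hp /= eqxx | rewrite andbF /= (negbTE ip)].
rewrite big_pred0 ?/bR ?(negbTE hp) ?mul0r //.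
by move=> i; case: (eqVneq i p) => [->|ip]; [rewrite (negbTE hp) | rewrite andbF].
Qed.

Lemma sqrt_key (R : rcfType) (m e C B : R) : 0 < m ->
  e * C - m^-1 * B =
  Num.sqrt (2 * m) * (e * (Num.sqrt (2 * m) * ((2 * m)^-1 * C)) - Num.sqrt (2 / m) * ((2 * m)^-1 * B)).
Proof.
move=> m0; set t := Num.sqrt (2 * m); set u := Num.sqrt (2 / m).
have ht : t * t = 2 * m by rewrite -expr2 sqr_sqrtr // mulr_ge0 // ltW.
have htu : t * u = 2.
  have m0' : m != 0 by rewrite gt_eqF.
  rewrite -sqrtrM ?mulr_ge0 ?ltW //.
  have -> : 2 * m * (2 / m) = 2 ^+ 2 by field.
  by rewrite sqrtr_sqr ger0_norm.
have m0' : m != 0 by rewrite gt_eqF.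
transitivity (e * (t * t) * (2 * m)^-1 * C - (t * u) * (2 * m)^-1 * B); last by ring.
by rewrite ht htu; field.
Qed.

Lemma E3 (R : rcfType) X Y n (D : data R X Y n)
  (hfold : forall t : 'I_2, (0 < nfold D t)%N)
  (hbeta : forall (r : 'I_2) (a : bool) (x : X) (j : 'I_n),
      (fold D j != r) || (as_ D j != a) -> beta D r a x j = 0) i :
  mxvec (Qm D i) - mxvec (Psm D (rfold D i)) =
  Num.sqrt (2 * (nfold D (fold D i))%:R) *:
    (row i (facesplit 1%:M (Dmx D (fold D i))) - mxvec (Vmx D (fold D i))).
Proof.
rewrite -linearB /=; apply/matrixP => z a.
rewrite (mxvecEz (Qm D i - Psm D (rfold D i))) [RHS]mxE [in RHS]mxE.
rewrite [(- mxvec _) _ _]mxE (mxvecEz (Vmx D (fold D i))).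
rewrite !mxE.
case: (unvec a) => p q /=.
rewrite -/(Cb D i q) /rfold oth_inv eqxx /bR /= mul1r.
have m0 : 0 < (nfold D (fold D i))%:R :> R by rewrite ltr0n hfold.
case: (boolP (fold D p == fold D i)) => hp /=.
  rewrite !mul1r (eqP hp).
  have -> : (if p == q then 0 else (2 * (nfold D (fold D i))%:R)^-1 *
     (beta D (oth (fold D i)) true (xs D p) q - beta D (oth (fold D i)) false (xs D p) q))
     = (2 * (nfold D (fold D i))%:R)^-1 *
     (beta D (oth (fold D i)) true (xs D p) q - beta D (oth (fold D i)) false (xs D p) q).
    case: eqP => // <-.
    rewrite !hbeta ?subrr ?mulr0 // (eqP hp) eq_sym oth_neq //.
  by rewrite eq_sym; apply: sqrt_key.
have -> : (p == i) = false by apply/negbTE; apply: contra hp => /eqP ->.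
rewrite eq_sym.
have -> : (p == i) = false by apply/negbTE; apply: contra hp => /eqP ->.
rewrite /=; ring.
Qed.

Lemma sum_fold_oth (Z : nmodType) n (f : 'I_n -> 'I_2) (F : 'I_n -> Z) :
  \sum_(r < 2) \sum_(i | f i == oth r) F i = \sum_i F i.
Proof.
rewrite (sum_fold f (fun _ i => F i)) !sum2.
have -> : oth s1 = s2 by [].
have -> : oth s2 = s1 by [].
by rewrite addrC.
Qed.

Lemma sum_const_fold (R : pzRingType) (Z : lmodType R) X Y n (D : data R X Y n) t (x : Z) :
  \sum_(i | fold D i == t) x = (nfold D t)%:R *: x.
Proof. by rewrite sumr_const scaler_nat /nfold cardsE. Qed.

Lemma psibar_lcv (R : rcfType) (V : lmodType R) X Y n (Lam : X -> Y -> V) (D : data R X Y n)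
  (hfold : forall t : 'I_2, (0 < nfold D t)%N)
  (hbeta : forall (r : 'I_2) (a : bool) (x : X) (j : 'I_n),
      (fold D j != r) || (as_ D j != a) -> beta D r a x j = 0) :
  psibar Lam D = lcv Lam D (mxvec (Cmx D)).
Proof.
have nz : forall t, (nfold D t)%:R != 0 :> R by move=> t; rewrite pnatr_eq0 -lt0n hfold.
rewrite /psibar.
have h1 : forall r, psir Lam D r + (nfold D (oth r))%:R^-1 *:
     \sum_(i < n | fold D i == oth r) phiri Lam D r i =
     \sum_(i < n | fold D i == oth r) (nfold D (fold D i))%:R^-1 *: lcv Lam D (mxvec (Qm D i)).
  move=> r.
  rewrite (eq_bigr (fun i => lcv Lam D (mxvec (Qm D i)) - psir Lam D r)); last first.
    move=> i /eqP hi; have hr : rfold D i = r by rewrite /rfold hi oth_inv.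
    by rewrite -hr E1 // hr.
  rewrite sumrB sum_const_fold scalerBr scalerA mulVf ?nz // scale1r.
  by rewrite addrC subrK scaler_sumr; apply: eq_bigr => i /eqP ->.
under eq_bigr => r _ do rewrite h1.
rewrite sum_fold_oth scaler_sumr.
under eq_bigr => i _ do rewrite scalerA -lcvZ.
rewrite -lcv_sum; congr (lcv _ _ _).
apply/matrixP => z a; rewrite summxE (mxvecEz (Cmx D)).
under eq_bigr => i _ do rewrite mxE (mxvecEz (Qm D i)).
case: (unvec a) => p q /=.
rewrite (bigD1 p) //= big1 ?addr0.
  by rewrite !mxE eqxx mul1r invfM.
by move=> i /negbTE ip; rewrite !mxE eq_sym ip mul0r mulr0.
Qed.

Lemma scal_key (R : fieldType) N (c m : R) (M : 'M[R]_1) (y : 'rV[R]_N) :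
  c * c = 2 * m -> m != 0 -> (2 : R) != 0 ->
  2^-1 *: (m^-1 *: ((c *: M) 0 0 *: (c *: y))) = M 0 0 *: y.
Proof.
move=> hc m0 t0; rewrite mxE !scalerA; congr (_ *: _).
transitivity ((2 * m)^-1 * (c * c) * M 0 0); first by rewrite invfM; ring.
by rewrite hc mulVf ?mul1r // mulf_neq0.
Qed.

Lemma sigma_lcv (R : rcfType) (V : lmodType R) (inner : V -> V -> R) X Y n
  (k : X -> X -> R) (l : Y -> Y -> R) (Lam : X -> Y -> V) (D : data R X Y n)
  (hlin : forall (c : R) (u v w : V), inner (c *: u + v) w = c * inner u w + inner v w)
  (hsym : forall u v : V, inner u v = inner v u)
  (hLam : forall x x' y y', inner (Lam x y) (Lam x' y') = k x x' * l y y')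
  (hfold : forall t : 'I_2, (0 < nfold D t)%N)
  (hbeta : forall (r : 'I_2) (a : bool) (x : X) (j : 'I_n),
      (fold D j != r) || (as_ D j != a) -> beta D r a x j = 0) b :
  Sigman Lam inner D (lcv Lam D b) = lcv Lam D (b *m Tmx k l D *m (Umx D)^T).
Proof.
have nz : forall t, (nfold D t)%:R != 0 :> R by move=> t; rewrite pnatr_eq0 -lt0n hfold.
set g := fun i => row i (facesplit 1%:M (Dmx D (fold D i))) - mxvec (Vmx D (fold D i)).
have hp : forall i, phiri Lam D (rfold D i) i =
    lcv Lam D (Num.sqrt (2 * (nfold D (fold D i))%:R) *: g i).
  by move=> i; rewrite -E3 // lcvB -E2 -E1.
rewrite /Sigman.
have h2 : forall r, (nfold D (oth r))%:R^-1 *: \sum_(i | fold D i == oth r)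
      (inner (phiri Lam D r i) (lcv Lam D b) *: phiri Lam D r i) =
    \sum_(i | fold D i == oth r) (nfold D (fold D i))%:R^-1 *:
      (inner (phiri Lam D (rfold D i) i) (lcv Lam D b) *: phiri Lam D (rfold D i) i).
  by move=> r; rewrite scaler_sumr; apply: eq_bigr => i /eqP hi; rewrite /rfold hi oth_inv.
under eq_bigr => r _ do rewrite h2.
rewrite sum_fold_oth scaler_sumr.
under eq_bigr => i _ do rewrite hp (inner_lcv D hlin hsym hLam) -!lcvZ.
rewrite -lcv_sum; congr (lcv _ _ _).
have ht : forall i, Num.sqrt (2 * (nfold D (fold D i))%:R) * Num.sqrt (2 * (nfold D (fold D i))%:R)
    = 2 * (nfold D (fold D i))%:R :> R.
  by move=> i; rewrite -expr2 sqr_sqrtr // mulr_ge0 // ler0n.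
have trZ : forall (c : R) (y : 'rV[R]_(n * n)), (c *: y)^T = c *: y^T.
  by move=> c y; apply/matrixP => u v; rewrite !mxE.
have t0 : (2 : R) != 0 by rewrite pnatr_eq0.
under eq_bigr => i _ do rewrite trZ -scalemxAr scal_key ?ht ?nz // rowtr11.
by rewrite -mulmx_sumr sum_gg -mulmxA TU mulmxA.
Qed.

Lemma woodbury (R : fieldType) N m (T U : 'M[R]_(N, m)) (e a : R) :
  e != 0 -> (e%:M + a *: (U^T *m T)) \in unitmx ->
  (e^-1 *: 1%:M - (a / e) *: (T *m invmx (e%:M + a *: (U^T *m T)) *m U^T))
     *m (e%:M + a *: (T *m U^T)) = 1%:M.
Proof.
move=> e0 Mu; set M := (e%:M + a *: (U^T *m T)).
have key : T *m invmx M *m U^T *m (e%:M + a *: (T *m U^T)) = T *m U^T.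
  rewrite -mulmxA.
  have -> : U^T *m (e%:M + a *: (T *m U^T)) = M *m U^T.
    by rewrite /M mulmxDr mulmxDl mul_mx_scalar mul_scalar_mx -!scalemxAl -!scalemxAr mulmxA.
  by rewrite mulmxA -(mulmxA T) mulVmx // mulmx1.
rewrite mulmxBl -!scalemxAl key mul1mx.
rewrite scalerDr scale_scalar_mx mulVf // scalerA (mulrC e^-1) addrK.
by [].
Qed.

Unset Implicit Arguments.

Theorem lemmaH5
  (R : rcfType) (X Y : Type) (k : X -> X -> R) (l : Y -> Y -> R)
  (V : lmodType R) (inner : V -> V -> R) (Lam : X -> Y -> V)
  (n : nat) (D : data R X Y n) (eps : R) (Omega : V -> V)
  (* bounded kernels *)
  (hk : exists M : R, forall x : X, k x x <= M)
  (hl : exists M : R, forall y : Y, l y y <= M)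
  (* inner product of the real pre-Hilbert space H *)
  (hlin : forall (c : R) (u v w : V), inner (c *: u + v) w = c * inner u w + inner v w)
  (hsym : forall u v : V, inner u v = inner v u)
  (hpos : forall u : V, u != 0 -> 0 < inner u u)
  (* tensor-product feature map Lambda_{x,y} = K_x (x) L_y *)
  (hLam : forall x x' y y', inner (Lam x y) (Lam x' y') = k x x' * l y y')
  (* folds: a partition of [n] into two nonempty folds *)
  (hfold : forall t : 'I_2, (0 < nfold D t)%N)
  (* propensity estimates in (0,1) *)
  (hpi : forall (r : 'I_2) (x : X), 0 < pihat D r x < 1)
  (* support of the coefficient vectors beta *)
  (hbeta : forall (r : 'I_2) (a : bool) (x : X) (j : 'I_n),
      (fold D j != r) || (as_ D j != a) -> beta D r a x j = 0)
  (heps : 0 < eps < 1)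
  (* Omega_n = ((1 - eps) Sigma_n + eps I)^{-1} *)
  (hOmL : forall h : V, Omega ((1 - eps) *: Sigman Lam inner D h + eps *: h) = h)
  (hOmR : forall h : V, (1 - eps) *: Sigman Lam inner D (Omega h) + eps *: Omega h = h)
  (* the (2n+4) x (2n+4) matrix inverted in Omega-tilde is invertible *)
  (hMid : Mid k l D eps \in unitmx) :
  Omega (psibar Lam D) =
    \sum_(i < n) \sum_(j < n) Bmx k l D eps i j *: Lam (xs D i) (ys D j).
Proof.
have /andP [e0 e1] := heps.
have eps0 : eps != 0 by rewrite gt_eqF.
set c := mxvec (Cmx D).
set b := c *m Omt k l D eps.
have hB : Bmx k l D eps = vec_mx b by rewrite /Bmx /vecr trmxK.
rewrite lcM hB vec_mxK.
have W := woodbury (a := 1 - eps) eps0 hMid.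
have hc : c = (1 - eps) *: (b *m Tmx k l D *m (Umx D)^T) + eps *: b.
  have : b *m (eps%:M + (1 - eps) *: (Tmx k l D *m (Umx D)^T)) = c.
    by rewrite /b /Omt -mulmxA W mulmx1.
  by rewrite mulmxDr mul_mx_scalar -scalemxAr mulmxA addrC => ->.
rewrite (psibar_lcv Lam hfold hbeta) -/c hc lcvD !lcvZ.
by rewrite -(sigma_lcv (k := k) (l := l) (D := D) hlin hsym hLam hfold hbeta) hOmL.
Qed.
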